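(* Define a relation $\sim$ on $\mathbb{G}$ by declaring $(s,p)\sim(t,q)$ if and only if there exists $\varphi\in \mathrm{Aut}(\mathbb{D})$ with $H_\varphi(s,p)=(t,q)$. Then $\sim$ is an equivalence relation on $\mathbb{G}$. Moreover, writing $[(s,p)]$ for the equivalence class of $(s,p)\in\mathbb{G}$, the set of equivalence classes is $\{[(a,0)] : a\in[0,1)\}$.
   Context: $\mathbb{D}$ is the open unit disc in $\mathbb{C}$ and $\mathrm{Aut}(\mathbb{D})$ its group of holomorphic automorphisms. The symmetrized bidisc is $\mathbb{G}=\{(z_1+z_2,z_1z_2): z_1,z_2\in\mathbb{D}\}\subset\mathbb{C}^2$. For $\varphi\in\mathrm{Aut}(\mathbb{D})$, $H_\varphi:\mathbb{G}\to\mathbb{G}$ is defined by $H_\varphi(z_1+z_2,z_1z_2)=(\varphi(z_1)+\varphi(z_2),\varphi(z_1)\varphi(z_2))$. Note $(a,0)\in\mathbb{G}$ for every $a\in[0,1)$. *)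

(* Defs.v *)
From Stdlib Require Import Reals.
From Coquelicot Require Import Coquelicot.
Open Scope R_scope.

Definition in_disc (z : C) : Prop := Cmod z < 1.

Definition holo_at (f : C -> C) (z : C) : Prop :=
  @ex_derive C_AbsRing C_NormedModule f z.

(* phi is a holomorphic automorphism of D: a holomorphic bijection of D onto D
   with holomorphic inverse (functions are C -> C, only their values on D matter). *)
Definition is_aut_disc (phi : C -> C) : Prop :=
  (forall z, in_disc z -> in_disc (phi z) /\ holo_at phi z) /\
  exists psi : C -> C,
    (forall z, in_disc z -> in_disc (psi z) /\ holo_at psi z) /\
    (forall z, in_disc z -> psi (phi z) = z) /\
    (forall z, in_disc z -> phi (psi z) = z).

Definition in_G (x : C * C) : Prop :=
  exists z1 z2 : C, in_disc z1 /\ in_disc z2 /\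
    x = (Cplus z1 z2, Cmult z1 z2).

(* H_phi (s,p) = (t,q), unfolded through the definition
   H_phi(z1+z2, z1 z2) = (phi z1 + phi z2, phi z1 phi z2). *)
Definition H_maps (phi : C -> C) (x y : C * C) : Prop :=
  exists z1 z2 : C, in_disc z1 /\ in_disc z2 /\
    x = (Cplus z1 z2, Cmult z1 z2) /\
    y = (Cplus (phi z1) (phi z2), Cmult (phi z1) (phi z2)).

Definition sim (x y : C * C) : Prop :=
  exists phi, is_aut_disc phi /\ H_maps phi x y.

Definition equiv_on (A : C * C -> Prop) (r : C * C -> C * C -> Prop) : Prop :=
  (forall x, A x -> r x x) /\
  (forall x y, A x -> A y -> r x y -> r y x) /\
  (forall x y z, A x -> A y -> A z -> r x y -> r y z -> r x z).

Definition sim_class (x : C * C) : C * C -> Prop :=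
  fun y => in_G y /\ sim x y.

Definition pt_a0 (a : R) : C * C := (RtoC a, RtoC 0).

(* Main.v *)
Require Import Defs.
From Stdlib Require Import Reals Lra Psatz Classical FunctionalExtensionality PropExtensionality.
From Coquelicot Require Import Coquelicot.
Open Scope R_scope.

Lemma Cinv_derive (z0 : C) : z0 <> 0%C ->
  @is_derive C_AbsRing C_NormedModule Cinv z0 (Copp (Cinv (Cmult z0 z0))).
Proof.
intros Hz0. split.
{ apply is_linear_scal_l. }
intros x Hx. pose proof (@is_filter_lim_locally_unique C_AbsRing (AbsRing_NormedModule C_AbsRing) z0 x Hx) as Hx0; subst x.
intros eps. refine (@locally_norm_le_locally C_AbsRing (AbsRing_NormedModule C_AbsRing) z0 _ _).
assert (Hr : 0 < Cmod z0) by (apply Cmod_gt_0; exact Hz0).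
set (r := Cmod z0) in *.
assert (Hd : 0 < Rmin (r/2) (eps * (r*r*r) / 2)).
{ apply Rmin_pos. lra. pose proof (cond_pos eps). apply Rmult_lt_0_compat; [|lra].
  apply Rmult_lt_0_compat; auto. apply Rmult_lt_0_compat; nra. }
exists (mkposreal _ Hd). intros y Hy. unfold ball_norm in Hy. simpl in Hy.
change (norm (minus y z0)) with (Cmod (Cminus y z0)) in Hy.
change (Cmod (Cminus (Cminus (Cinv y) (Cinv z0)) (Cmult (Cminus y z0) (Copp (Cinv (Cmult z0 z0))))) <= eps * Cmod (Cminus y z0)).
set (d := Cmod (Cminus y z0)) in *.
assert (Hd1 : d < r/2) by (eapply Rlt_le_trans; [exact Hy| apply Rmin_l]).
assert (Hd2 : d < eps * (r*r*r)/2) by (eapply Rlt_le_trans; [exact Hy| apply Rmin_r]).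
assert (Hy1 : r <= Cmod y + d).
{ unfold r, d. replace z0 with (Cplus y (Copp (Cminus y z0))) at 1 by ring.
  rewrite <- (Cmod_opp (Cminus y z0)). apply Cmod_triangle. }
assert (Hy0 : ~ (@eq C y (RtoC 0))).
{ intro E. subst y. rewrite Cmod_0 in Hy1. lra. }
replace (Cminus (Cminus (Cinv y) (Cinv z0)) (Cmult (Cminus y z0) (Copp (Cinv (Cmult z0 z0)))))
  with (Cdiv (Cmult (Cminus y z0) (Cminus y z0)) (Cmult y (Cmult z0 z0))) by (field; split; auto).
rewrite Cmod_div by (repeat apply Cmult_neq_0; auto).
rewrite !Cmod_mult. fold d r.
assert (0 <= d) by apply Cmod_ge_0.
assert (Hyp : 0 < Cmod y) by lra.
apply (Rmult_le_reg_r (Cmod y * (r * r))). apply Rmult_lt_0_compat; nra.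
unfold Rdiv. rewrite Rmult_assoc, Rinv_l by (apply Rgt_not_eq; apply Rmult_lt_0_compat; nra).
pose proof (cond_pos eps).
assert (Hk : eps*(r*r*r)/2 <= eps*(Cmod y*(r*r))). { assert (r/2 <= Cmod y) by lra. assert (0 <= eps*(r*r)) by nra. nra. }
rewrite Rmult_1_r. replace (eps * d * (Cmod y * (r * r))) with (d * (eps * (Cmod y * (r * r)))) by ring. apply Rmult_le_compat_l; lra.
Qed.

Lemma tr f x l : @is_derive C_AbsRing (AbsRing_NormedModule C_AbsRing) f x l -> @is_derive C_AbsRing C_NormedModule f x l.
Proof.
unfold is_derive, filterdiff. intros [[H1 H2 [M [HM H3]]] H4]. split.
- constructor; auto. exists M; split; auto.
- intros y Hy eps. specialize (H4 y Hy eps). exact H4.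
Qed.
Lemma tr' f x l : @is_derive C_AbsRing C_NormedModule f x l -> @is_derive C_AbsRing (AbsRing_NormedModule C_AbsRing) f x l.
Proof.
unfold is_derive, filterdiff. intros [[H1 H2 [M [HM H3]]] H4]. split.
- constructor; auto. exists M; split; auto.
- intros y Hy eps. specialize (H4 y Hy eps). exact H4.
Qed.

Lemma exd_id (x : C) : @ex_derive C_AbsRing C_NormedModule (fun t => t) x.
Proof. exists (RtoC 1). apply tr. apply (@is_derive_id C_AbsRing). Qed.

Lemma exd_mult (f g : C -> C) (x : C) :
  @ex_derive C_AbsRing C_NormedModule f x -> @ex_derive C_AbsRing C_NormedModule g x ->
  @ex_derive C_AbsRing C_NormedModule (fun t => Cmult (f t) (g t)) x.
Proof.
intros [df Hf] [dg Hg]. eexists. apply tr. apply (@is_derive_mult C_AbsRing); try apply tr'; eauto.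
intros; apply Cmult_comm.
Qed.

Lemma exd_inv (g : C -> C) (x : C) :
  @ex_derive C_AbsRing C_NormedModule g x -> g x <> 0%C ->
  @ex_derive C_AbsRing C_NormedModule (fun t => Cinv (g t)) x.
Proof.
intros Hg Hnz. apply (@ex_derive_comp C_AbsRing C_NormedModule Cinv g); auto.
eexists. apply Cinv_derive. auto. destruct Hg as [dg Hg]. exists dg. apply tr'. exact Hg.
Qed.

Lemma Cmod_lt1 (z : C) : Cmod z < 1 <-> fst z ^ 2 + snd z ^ 2 < 1.
Proof.
unfold Cmod. split; intro H.
- apply sqrt_lt_0_alt. rewrite sqrt_1. exact H.
- rewrite <- sqrt_1. apply sqrt_lt_1_alt. split; [|exact H]. nra.
Qed.

Lemma D_nz (b z : C) : Cmod b < 1 -> Cmod z < 1 -> Cminus 1 (Cmult (Cconj b) z) <> 0%C.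
Proof.
intros Hb Hz E.
assert (H : Cmult (Cconj b) z = Cminus 1 (Cminus 1 (Cmult (Cconj b) z))) by ring.
rewrite E in H. replace (Cminus 1 0) with (RtoC 1) in H by ring.
apply (f_equal Cmod) in H. rewrite Cmod_mult, Cmod_conj, Cmod_1 in H.
pose proof (Cmod_ge_0 b). pose proof (Cmod_ge_0 z). nra.
Qed.

Definition mob (b : C) (z : C) : C := Cmult (Cminus z b) (Cinv (Cminus 1 (Cmult (Cconj b) z))).
Definition rot (l : C) (z : C) : C := Cmult l z.

Lemma mob_holo (b z : C) : Cmod b < 1 -> Cmod z < 1 -> holo_at (mob b) z.
Proof.
intros Hb Hz. unfold holo_at, mob. apply exd_mult.
- apply (@ex_derive_minus C_AbsRing C_NormedModule (fun t => t) (fun _ => b)).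
  apply exd_id. apply ex_derive_const.
- apply exd_inv. 2: apply D_nz; auto.
  apply (@ex_derive_minus C_AbsRing C_NormedModule (fun _ => RtoC 1) (fun t => Cmult (Cconj b) t)).
  apply ex_derive_const. apply exd_mult. apply ex_derive_const. apply exd_id.
Qed.

Lemma mob_disc (b z : C) : Cmod b < 1 -> Cmod z < 1 -> Cmod (mob b z) < 1.
Proof.
intros Hb Hz. pose proof (D_nz b z Hb Hz) as HD.
unfold mob. rewrite Cmod_mult, Cmod_inv by exact HD.
assert (HDp : 0 < Cmod (Cminus 1 (Cmult (Cconj b) z))) by (apply Cmod_gt_0; auto).
apply (Rmult_lt_reg_r (Cmod (Cminus 1 (Cmult (Cconj b) z)))); auto.
rewrite Rmult_assoc, Rinv_l, Rmult_1_r, Rmult_1_l by lra.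
apply Cmod_lt1 in Hb. apply Cmod_lt1 in Hz.
destruct b as [b1 b2]; destruct z as [x y]; simpl in Hb, Hz.
unfold Cmod. apply sqrt_lt_1_alt. simpl. clear HD HDp. split.
{ apply Rplus_le_le_0_compat; rewrite Rmult_1_r; apply Rle_0_sqr. }
assert (0 < (1 - (b1^2+b2^2)) * (1 - (x^2+y^2))) by (apply Rmult_lt_0_compat; lra).
match goal with |- ?L < ?R => assert (R - L = (1 - (b1^2+b2^2)) * (1 - (x^2+y^2))) by ring end.
lra.
Qed.

Lemma mob_inv (b z : C) : Cmod b < 1 -> Cmod z < 1 -> mob (Copp b) (mob b z) = z.
Proof.
intros Hb Hz. pose proof (D_nz b z Hb Hz) as HD. pose proof (D_nz b b Hb Hb) as HD2.
unfold mob. rewrite Copp_conj.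
set (c := Cconj b) in *.
field. split.
- exact HD.
- intro E. apply HD2. rewrite <- E. simpl. ring.
Qed.

Lemma mob_inv' (b z : C) : Cmod b < 1 -> Cmod z < 1 -> mob b (mob (Copp b) z) = z.
Proof.
intros Hb Hz. pose proof (mob_inv (Copp b) z) as H.
replace (Copp (Copp b)) with b in H by ring. apply H; auto. rewrite Cmod_opp; auto.
Qed.


Lemma aut_mob (b : C) : Cmod b < 1 -> is_aut_disc (mob b).
Proof.
intros Hb. assert (Hb' : Cmod (Copp b) < 1) by (rewrite Cmod_opp; auto).
split.
- intros z Hz. split. apply mob_disc; auto. apply mob_holo; auto.
- exists (mob (Copp b)). split; [|split].
  + intros z Hz. split. apply mob_disc; auto. apply mob_holo; auto.
  + intros z Hz. apply mob_inv; auto.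
  + intros z Hz. apply mob_inv'; auto.
Qed.

Lemma rot_holo (l z : C) : holo_at (rot l) z.
Proof. unfold holo_at, rot. apply exd_mult. apply ex_derive_const. apply exd_id. Qed.

Lemma aut_rot (l : C) : Cmod l = 1 -> is_aut_disc (rot l).
Proof.
intros Hl.
assert (Hll : Cmult (Cconj l) l = 1%C).
{ rewrite Cmult_comm, <- Cmod2_conj, Hl. unfold RtoC. simpl. f_equal; ring. }
split.
- intros z Hz. split. unfold in_disc, rot in *. rewrite Cmod_mult, Hl. lra. apply rot_holo.
- exists (rot (Cconj l)). split; [|split].
  + intros z Hz. split. unfold in_disc, rot in *. rewrite Cmod_mult, Cmod_conj, Hl. lra. apply rot_holo.
  + intros z Hz. unfold rot. rewrite Cmult_assoc, Hll. ring.
  + intros z Hz. unfold rot. rewrite Cmult_assoc, (Cmult_comm l), Hll. ring.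
Qed.

Lemma aut_comp (f g : C -> C) : is_aut_disc f -> is_aut_disc g -> is_aut_disc (fun z => g (f z)).
Proof.
intros [Hf [pf [Hpf [Hpf1 Hpf2]]]] [Hg [pg [Hpg [Hpg1 Hpg2]]]].
split.
- intros z Hz. destruct (Hf z Hz) as [Hf1 Hf2]. destruct (Hg (f z) Hf1) as [Hg1 Hg2].
  split; auto. unfold holo_at in *. apply (@ex_derive_comp C_AbsRing C_NormedModule g f); auto.
  destruct Hf2 as [d Hd]. exists d. apply tr'. exact Hd.
- exists (fun z => pf (pg z)). split; [|split].
  + intros z Hz. destruct (Hpg z Hz) as [Hg1 Hg2]. destruct (Hpf (pg z) Hg1) as [Hf1 Hf2].
    split; auto. unfold holo_at in *. apply (@ex_derive_comp C_AbsRing C_NormedModule pf pg); auto.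
    destruct Hg2 as [d Hd]. exists d. apply tr'. exact Hd.
  + intros z Hz. rewrite Hpg1 by (apply Hf; auto). apply Hpf1; auto.
  + intros z Hz. rewrite Hpf2 by (apply Hpg; auto). apply Hpg2; auto.
Qed.

Lemma aut_id : is_aut_disc (fun z => z).
Proof.
split.
- intros z Hz. split; auto. apply exd_id.
- exists (fun z => z). repeat split; auto; apply exd_id.
Qed.

Lemma aut_inv (phi psi : C -> C) : is_aut_disc phi ->
  (forall z, in_disc z -> in_disc (psi z) /\ holo_at psi z) ->
  (forall z, in_disc z -> psi (phi z) = z) ->
  (forall z, in_disc z -> phi (psi z) = z) -> is_aut_disc psi.
Proof.
intros [Hphi _] H1 H2 H3. split; auto. exists phi. auto.
Qed.


Lemma pair_eq (u1 u2 w1 w2 : C) :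
  Cplus u1 u2 = Cplus w1 w2 -> Cmult u1 u2 = Cmult w1 w2 ->
  (w1 = u1 /\ w2 = u2) \/ (w1 = u2 /\ w2 = u1).
Proof.
intros Hs Hp.
assert (E : Cmult (Cminus w1 u1) (Cminus w1 u2) = 0%C).
{ transitivity (Cplus (Cminus (Cmult w1 w1) (Cmult w1 (Cplus u1 u2))) (Cmult u1 u2)). ring.
  rewrite Hs, Hp. ring. }
destruct (classic (w1 = u1)) as [H1|H1].
- left. split; auto. subst w1.
  assert (w2 = Cminus (Cplus u1 w2) u1) by ring. rewrite <- Hs in H. rewrite H. ring.
- destruct (classic (w1 = u2)) as [H2|H2].
  + right. split; auto. subst w1.
    assert (w2 = Cminus (Cplus u2 w2) u2) by ring. rewrite <- Hs in H. rewrite H. ring.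
  + exfalso. apply (Cmult_neq_0 (Cminus w1 u1) (Cminus w1 u2)); auto;
    apply Cminus_eq_contra; auto.
Qed.

Lemma sim_refl x : in_G x -> sim x x.
Proof.
intros [z1 [z2 [H1 [H2 E]]]]. exists (fun z => z). split. apply aut_id.
exists z1, z2. auto.
Qed.

Lemma sim_sym x y : sim x y -> sim y x.
Proof.
intros [phi [Haut [z1 [z2 [H1 [H2 [E1 E2]]]]]]].
pose proof Haut as [Hphi [psi [Hpsi [Hi1 Hi2]]]].
exists psi. split. apply (aut_inv phi psi); auto.
exists (phi z1), (phi z2). split. apply Hphi; auto. split. apply Hphi; auto.
split; auto. rewrite !Hi1; auto.
Qed.

Lemma sim_trans x y z : sim x y -> sim y z -> sim x z.
Proof.
intros [phi [Ha [z1 [z2 [H1 [H2 [E1 E2]]]]]]] [chi [Hc [w1 [w2 [K1 [K2 [F1 F2]]]]]]].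
exists (fun t => chi (phi t)). split. apply aut_comp; auto.
exists z1, z2. repeat split; auto.
rewrite E2 in F1. pose proof (f_equal fst F1) as Fs. pose proof (f_equal snd F1) as Fp. cbn [fst snd] in Fs, Fp.
destruct (pair_eq _ _ _ _ Fs Fp) as [[-> ->]|[-> ->]]; rewrite F2; auto.
f_equal. apply Cplus_comm. apply Cmult_comm.
Qed.

Lemma normal_form z1 z2 : in_disc z1 -> in_disc z2 ->
  exists a, 0 <= a < 1 /\ sim (Cplus z1 z2, Cmult z1 z2) (pt_a0 a).
Proof.
intros H1 H2. unfold in_disc in *.
set (w := mob z2 z1).
assert (Hw : Cmod w < 1) by (apply mob_disc; auto).
assert (Hm0 : mob z2 z2 = 0%C) by (unfold mob; ring).
destruct (classic (w = 0%C)) as [Hw0|Hw0].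
- exists 0. split. lra. exists (mob z2). split. apply aut_mob; auto.
  exists z1, z2. repeat split; auto. fold w. rewrite Hw0, Hm0. unfold pt_a0. f_equal; ring.
- set (m := Cmod w).
  assert (Hm : 0 < m) by (apply Cmod_gt_0; auto).
  set (l := Cmult (Cconj w) (Cinv (RtoC m))).
  assert (HmC : RtoC m <> 0%C) by (intro E; apply RtoC_inj in E; lra).
  assert (Hl : Cmod l = 1).
  { unfold l. rewrite Cmod_mult, Cmod_conj, Cmod_inv, Cmod_R, Rabs_pos_eq by (auto; lra).
    fold m. field. lra. }
  assert (Hlw : Cmult l w = RtoC m).
  { unfold l. assert (Hc : Cmult w (Cconj w) = Cmult (RtoC m) (RtoC m)).
    { rewrite <- Cmod2_conj. fold m. rewrite RtoC_pow. simpl. ring. }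
    transitivity (Cmult (Cmult w (Cconj w)) (Cinv (RtoC m))). ring.
    rewrite Hc. field. auto. }
  exists m. split. split. lra. exact Hw.
  exists (fun t => rot l (mob z2 t)). split. apply aut_comp. apply aut_mob; auto. apply aut_rot; auto.
  exists z1, z2. repeat split; auto. unfold rot. fold w. rewrite Hlw, Hm0. unfold pt_a0. f_equal; ring.
Qed.

Theorem theorem2p1 :
  equiv_on in_G sim /\
  (forall S : C * C -> Prop,
     (exists x, in_G x /\ S = sim_class x) <->
     (exists a : R, 0 <= a < 1 /\ S = sim_class (pt_a0 a))).
Proof.
split.
{ split; [|split].
  - intros x Hx. apply sim_refl; auto.
  - intros x y _ _. apply sim_sym.
  - intros x y z _ _ _. apply sim_trans. }
intros S. split.
- intros [x [Hx ->]]. pose proof Hx as [z1 [z2 [H1 [H2 E]]]].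
  destruct (normal_form z1 z2 H1 H2) as [a [Ha Hs]]. rewrite <- E in Hs.
  exists a. split; auto. apply functional_extensionality. intros y.
  apply propositional_extensionality. unfold sim_class. split.
  + intros [Hy Hxy]. split; auto. eapply sim_trans. apply sim_sym; eauto. auto.
  + intros [Hy Hay]. split; auto. eapply sim_trans; eauto.
- intros [a [Ha ->]]. exists (pt_a0 a). split; auto.
  exists (RtoC a), (RtoC 0). unfold in_disc. rewrite Cmod_R, Cmod_0, Rabs_pos_eq by lra.
  repeat split; try lra. unfold pt_a0. f_equal; ring.
Qed.
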